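(* Let $d\ge1$ and let $\rho$ be a finite intensity on $\Omega=B^d_+\times B^d_+$ with total mass $\Lambda>0$ such that $\mu=\rho/\Lambda$ is absolutely continuous with respect to Lebesgue measure on $\mathbb{R}^{2d}$, and assume that neither the green marginal nor the red marginal of $\mu$ (on $\mathbb{R}^d$) is supported on a proper linear subspace of $\mathbb{R}^d$. Then for every measurable map $\phi:[0,1]\to\Omega$ with $\phi_*(\mathrm{Uniform}[0,1])=\mu$, the pullback kernel $W_\phi(u,v)=K(\phi(u),\phi(v))$ on $[0,1]^2$ is not sectionally of bounded variation.
   Context: $B^d_+=\{x\in\mathbb{R}^d:x_k\ge0\ \forall k,\ \|x\|\le1\}$, $\Omega=B^d_+\times B^d_+$; a point $s\in\Omega$ is written $s=(\vec g_s,\vec r_s)$ and $K(s,t)=\vec g_s\cdot\vec r_t$. The green (resp. red) marginal of $\mu$ is its pushforward under $s\mapsto\vec g_s$ (resp. $s\mapsto \vec r_s$). A function $f:[0,1]\to\mathbb{R}$ is in $\mathrm{BV}([0,1])$ if $\sup\sum_{i=1}^k|f(t_i)-f(t_{i-1})|<\infty$ over all partitions $0=t_0<\dots<t_k=1$. A kernel $W:[0,1]^2\to\mathbb{R}$ is sectionally of bounded variation if for almost every $v\in[0,1]$ the function $u\mapsto W(u,v)$ is in $\mathrm{BV}([0,1])$ and for almost every $u\in[0,1]$ the function $v\mapsto W(u,v)$ is in $\mathrm{BV}([0,1])$. *)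

(* Defs.v *)
From HB Require Import structures.
From mathcomp Require Import all_boot all_order all_algebra.
From mathcomp Require Import all_classical all_reals all_analysis.
Set Implicit Arguments. Unset Strict Implicit. Unset Printing Implicit Defensive.
Import Order.TTheory GRing.Theory Num.Theory.
Local Open Scope classical_set_scope.
Local Open Scope ring_scope.

(** Ambient space R^d x R^d; a point s = (g_s, r_s). *)
Definition pt (R : realType) (d : nat) := (d.-tuple R * d.-tuple R)%type.

Definition dotp (R : realType) (d : nat) (x y : d.-tuple R) : R :=
  \sum_(k < d) tnth x k * tnth y k.

Definition Bplus (R : realType) (d : nat) : set (d.-tuple R) :=
  [set x | (forall k : 'I_d, 0 <= tnth x k) /\ dotp x x <= 1].

Definition Omega (R : realType) (d : nat) : set (pt R d) :=
  [set s | @Bplus R d s.1 /\ @Bplus R d s.2].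

Definition K (R : realType) (d : nat) (s t : pt R d) : R := dotp s.1 t.2.

Definition linear_subspace (R : realType) (d : nat) (V : set (d.-tuple R)) :=
  [/\ V [tuple (0 : R) | _ < d],
      (forall x y, V x -> V y -> V [tuple tnth x i + tnth y i | i < d]) &
      (forall (c : R) x, V x -> V [tuple c * tnth x i | i < d])].

Definition proper_linear_subspace (R : realType) (d : nat)
    (V : set (d.-tuple R)) :=
  linear_subspace V /\ V <> setT.

Definition box2 (R : realType) (d : nat) (a1 b1 a2 b2 : 'I_d -> R) :
    set (pt R d) :=
  [set s | forall k : 'I_d,
     (a1 k <= tnth s.1 k <= b1 k) /\ (a2 k <= tnth s.2 k <= b2 k)].

Definition vol2 (R : realType) (d : nat) (a1 b1 a2 b2 : 'I_d -> R) : R :=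
  (\prod_(k < d) (b1 k - a1 k)) * (\prod_(k < d) (b2 k - a2 k)).

Definition lebesgue_null2 (R : realType) (d : nat) (N : set (pt R d)) :=
  forall eps : R, 0 < eps ->
  exists a1 b1 a2 b2 : nat -> 'I_d -> R,
    [/\ (forall n k, a1 n k <= b1 n k /\ a2 n k <= b2 n k),
        N `<=` \bigcup_n box2 (a1 n) (b1 n) (a2 n) (b2 n) &
        (forall m, \sum_(0 <= n < m) vol2 (a1 n) (b1 n) (a2 n) (b2 n) <= eps)].

Definition abs_cont_lebesgue2 (R : realType) (d : nat)
    (mu : set (pt R d) -> \bar R) :=
  forall A : set (pt R d), measurable A -> lebesgue_null2 A -> mu A = 0%E.

Definition sectionally_BV (R : realType) (W : R -> R -> R) :=
  {ae (@lebesgue_measure R), forall v, 0 <= v <= 1 -> bounded_variation 0 1 (fun u => W u v)} /\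
  {ae (@lebesgue_measure R), forall u, 0 <= u <= 1 -> bounded_variation 0 1 (fun v => W u v)}.

(* Main.v *)
Require Import Defs.
From HB Require Import structures.
From mathcomp Require Import all_boot all_order all_algebra.
From mathcomp Require Import all_classical all_reals all_analysis.
From mathcomp Require Import ring lra.
Set Implicit Arguments. Unset Strict Implicit. Unset Printing Implicit Defensive.
Import Order.TTheory GRing.Theory Num.Theory.
Local Open Scope classical_set_scope.
Local Open Scope ring_scope.
Definition rowv (R:realType) d (x : d.-tuple R) : 'rV[R]_d := \row_j tnth x j.

Lemma span_lemma (R : realType) d (S : set (d.-tuple R)) :
  (forall C : 'M[R]_d, (forall x, S x -> rowv x *m C = 0) -> C = 0) ->
  exists n (xs : 'I_n -> d.-tuple R) (D : 'M[R]_(d,n)),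
    (forall i, S (xs i)) /\ forall y k, tnth y k = \sum_(i < n) D k i * dotp y (xs i).
Proof.
move=> HC.
pose mat k (xs : 'I_k -> d.-tuple R) : 'M[R]_(k,d) := \matrix_(i, j) tnth (xs i) j.
pose P n := `[< exists k (xs : 'I_k -> d.-tuple R), (forall i, S (xs i)) /\ \rank (mat k xs) = n >].
have exP : exists n, P n.
  exists 0%N; apply/asboolP; exists 0%N, (fun i => match (@ltn0 0) with _ => [tuple of nseq d 0] end).
  split; first by case.
  by rewrite flatmx0 mxrank0.
have ubP : forall n, P n -> (n <= d)%N.
  by move=> n /asboolP [k [xs [_ <-]]]; exact: rank_leq_col.
case: (ex_maxnP exP ubP) => m /asboolP [k [xs [Sxs rk]]] maxm.
have sub : forall x, S x -> (rowv x <= mat k xs)%MS.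
  move=> x Sx; apply/negPn/negP => nsub.
  pose xs' : 'I_(1 + k)%N -> d.-tuple R :=
    fun i => match fintype.split i with inl _ => x | inr j => xs j end.
  have E : mat (1 + k)%N xs' = col_mx (rowv x) (mat k xs).
    apply/matrixP => i j; rewrite !mxE /xs'.
    by case: splitP => l _; rewrite mxE.
  have : P (\rank (mat (1 + k)%N xs')).
    apply/asboolP; exists (1 + k)%N, xs'; split => //.
    by move=> i; rewrite /xs'; case: fintype.split.
  move/maxm; rewrite E -rk; apply/negP; rewrite -ltnNge.
  apply: rank_ltmx; rewrite ltmxE; apply/andP; split.
    by rewrite -addsmxE addsmxSr.
  by rewrite col_mx_sub (negbTE nsub).
have full : (1%:M <= mat k xs)%MS.
  rewrite submxE mul1mx; apply/eqP; apply: HC => x Sx.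
  by apply/eqP; rewrite -submxE; exact: sub.
case/submxP: full => D HD.
exists k, xs, D; split => // y k0.
transitivity (\sum_(j < d) tnth y j * (1%:M : 'M[R]_d) k0 j).
  rewrite (bigD1 k0) //= mxE eqxx mulr1 big1 ?addr0 // => j /negbTE.
  by rewrite mxE eq_sym => ->; rewrite mulr0.
rewrite HD /dotp.
under eq_bigr => j _ do rewrite mxE mulr_sumr.
rewrite exchange_big /=; apply: eq_bigr => i _.
rewrite mulr_sumr; apply: eq_bigr => j _.
by rewrite mxE mulrCA.
Qed.

Section BVlemmas.
Variable R : realType.
Notation BV := bounded_variation.

Lemma BV_cst (a b c : R) : BV a b (fun _ => c).
Proof.
exists 0 => _ [s _ <-]; rewrite /variation big1 // => i _.
by rewrite /= subrr normr0.
Qed.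

Lemma BV_scale (a b c : R) f : BV a b f -> BV a b (fun x => c * f x).
Proof.
move=> [M hM]; exists (`|c| * M) => _ [s hs <-].
have -> : variation a b (fun x => c * f x) s = `|c| * variation a b f s.
  rewrite /variation mulr_sumr; apply: eq_bigr => i _.
  by rewrite /= -mulrBr normrM.
by rewrite ler_wpM2l // hM //; exists s.
Qed.

Lemma BV_sum (a b : R) n (F : 'I_n -> R -> R) : a < b ->
  (forall i, BV a b (F i)) -> BV a b (fun x => \sum_(i < n) F i x).
Proof.
move=> ab; elim: n F => [|n IH] F hF.
  under [fun x => _]funext => x do rewrite big_ord0. exact: BV_cst.
under [fun x => _]funext => x do rewrite big_ord_recr.
apply: (bounded_variationD ab); last exact: hF.
exact: (IH (fun i => F (widen_ord (leqnSn n) i))).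
Qed.
End BVlemmas.

Lemma dotpC (R : realType) d (x y : d.-tuple R) : dotp x y = dotp y x.
Proof. by rewrite /dotp; apply: eq_bigr => i _; rewrite mulrC. Qed.

Lemma coordBV (R : realType) d (f : R -> d.-tuple R) (S : set (d.-tuple R)) :
  (forall C : 'M[R]_d, (forall x, S x -> rowv x *m C = 0) -> C = 0) ->
  (forall x, S x -> bounded_variation 0 1 (fun u => dotp (f u) x)) ->
  forall k, bounded_variation 0 1 (fun u => tnth (f u) k).
Proof.
move=> HC HS k.
have [n [xs [D [Sxs E]]]] := span_lemma HC.
under [fun u => _]funext => u do rewrite E.
apply: BV_sum => // i; apply: BV_scale; exact: HS.
Qed.

Lemma premise (R : realType) d (rho : {measure set (pt R d) -> \bar R}) (Lambda : R)
  (hL : 0 < Lambda) (phi : R -> pt R d)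
  (mphi : measurable_fun `[(0:R), 1]%classic phi)
  (hpush : forall A : set (pt R d), measurable A ->
       (rho A * (Lambda^-1)%:E)%E = lebesgue_measure (`[(0:R), 1]%classic `&` phi @^-1` A))
  (proj : pt R d -> d.-tuple R)
  (mproj : forall i, measurable_fun setT (fun s => tnth (proj s) i))
  (hnz : forall V, proper_linear_subspace V -> rho [set s | ~ V (proj s)] <> 0%E)
  (P : R -> Prop) (hae : {ae (@lebesgue_measure R), forall v, P v}) :
  forall C : 'M[R]_d,
   (forall x, [set proj (phi v) | v in [set v | 0 <= v <= 1 /\ P v]] x -> rowv x *m C = 0) ->
   C = 0.
Proof.
move=> C HC; case: (pselect (C = 0)) => // Cn0; exfalso.
pose V := [set x : d.-tuple R | rowv x *m C = 0].
have linV : linear_subspace V.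
  split.
  - rewrite /V /=; have -> : rowv [tuple (0:R) | _ < d] = 0.
      by apply/matrixP => i j; rewrite !mxE tnth_mktuple.
    by rewrite mul0mx.
  - move=> x y; rewrite /V /= => hx hy.
    have -> : rowv [tuple tnth x i + tnth y i | i < d] = rowv x + rowv y.
      by apply/matrixP => i j; rewrite !mxE tnth_mktuple.
    by rewrite mulmxDl hx hy addr0.
  - move=> c x; rewrite /V /= => hx.
    have -> : rowv [tuple c * tnth x i | i < d] = c *: rowv x.
      by apply/matrixP => i j; rewrite !mxE tnth_mktuple.
    by rewrite -scalemxAl hx scaler0.
have VnT : V <> setT.
  move=> VT; apply: Cn0; apply/row_matrixP => i; rewrite row0 rowE.
  pose e := [tuple ((i == j)%:R : R) | j < d].
  have He : V e by rewrite VT.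
  rewrite /V /= in He.
  suff -> : delta_mx 0 i = rowv e by [].
  by apply/matrixP => a j; rewrite !mxE tnth_mktuple ord1 eqxx /= eq_sym.
apply: (hnz V (conj linV VnT)).
set A := [set s | ~ V (proj s)].
pose h s := \sum_(j < d) (\sum_(i < d) tnth (proj s) i * C i j) ^+ 2.
have mh : measurable_fun setT h.
  apply: measurable_sum => j.
  apply: measurable_realfun.measurable_funX.
  apply: measurable_sum => i.
  apply: measurable_realfun.measurable_funM => //.
have Hj : forall s j, (rowv (proj s) *m C) 0 j = \sum_(i < d) tnth (proj s) i * C i j.
  by move=> s j; rewrite mxE; apply: eq_bigr => i _; rewrite mxE.
have mA : measurable A.
  have -> : A = ~` (h @^-1` [set 0]).
    apply/seteqP; split => s /=.
    - move=> nV h0; apply: nV; rewrite /V /=; apply/rowP => j.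
      have := @psumr_eq0P _ _ xpredT
        (fun j => (\sum_(i < d) tnth (proj s) i * C i j) ^+ 2) (fun j _ => sqr_ge0 _) h0 j isT.
      by move=> /eqP; rewrite sqrf_eq0 Hj mxE => /eqP.
    - move=> nh hV; apply: nh; rewrite /h big1 // => j _.
      move/rowP: hV => /(_ j); rewrite Hj mxE => ->.
      by rewrite expr0n.
  have mpre : measurable (h @^-1` [set 0]).
    by rewrite -[X in measurable X]setTI; apply: mh => //; exact: measurable_set1.
  exact: measurableC mpre.
have le0 : lebesgue_measure (`[(0:R), 1]%classic `&` phi @^-1` A) = 0%E.
  case: hae => N [mN N0 sN].
  apply/eqP; rewrite eq_le measure_ge0 andbT -N0; apply: le_measure.
  - by rewrite inE; apply: mphi => //; exact: measurable_itv.
  - by rewrite inE.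
  - move=> u [u01 Au]; apply: sN => /= Pu; apply: Au; rewrite /V /=; apply: HC.
    exists u => //; split => //; move: u01; rewrite /= in_itv /=.
have := hpush A mA; rewrite le0 => /eqP; rewrite mule_eq0 eqe invr_eq0 (gt_eqF hL) orbF.
by move/eqP.
Qed.
Lemma grid (R : realType) (r t : R) m : 0 < r -> (0 < m)%N -> 0 <= t <= m%:R * r ->
  exists j, (j < m)%N /\ j%:R * r <= t <= j.+1%:R * r.
Proof.
move=> r0; elim: m => // m IH _ /andP [t0 tm].
case: (ltnP 0 m) => m0.
  case: (lerP t (m%:R * r)) => tm'.
    have [|j [jm hj]] := IH m0; first by rewrite t0 tm'.
    by exists j; split => //; apply: ltn_trans jm _.
  by exists m; split => //; rewrite (ltW tm') tm.
move: m0; rewrite leqn0 => /eqP m0; subst m.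
by exists 0%N; split => //; rewrite mul0r t0 tm.
Qed.

Definition Jset (R : realType) (F : R -> R) (r : R) (j : nat) : set R :=
  [set u | (0 <= u <= 1) /\ j%:R * r <= F u <= j.+1%:R * r].

Definition lo (R : realType) d (c : R -> d.-tuple R) (F : R -> R) (L : R) (n j : nat)
  (k : 'I_d) : R :=
  if (j < n.+1)%N then tnth (c (xget 0 (Jset F (L / n.+1%:R) j))) k - L / n.+1%:R else 0.
Definition hi (R : realType) d (c : R -> d.-tuple R) (F : R -> R) (L : R) (n j : nat)
  (k : 'I_d) : R :=
  if (j < n.+1)%N then tnth (c (xget 0 (Jset F (L / n.+1%:R) j))) k + L / n.+1%:R else 0.

Lemma box2_measurable (R : realType) d (a1 b1 a2 b2 : 'I_d -> R) :
  measurable (box2 a1 b1 a2 b2).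
Proof.
have -> : box2 a1 b1 a2 b2 = \bigcap_(k in [set: 'I_d])
   ((fun s : pt R d => tnth s.1 k) @^-1` `[a1 k, b1 k]%classic `&`
    (fun s : pt R d => tnth s.2 k) @^-1` `[a2 k, b2 k]%classic).
  apply/seteqP; split => s /=.
    by move=> H k _ /=; rewrite !in_itv /=; case: (H k) => -> ->.
  by move=> H k; have := H k I; rewrite /= !in_itv /= => -[-> ->].
apply: fin_bigcap_measurable; first exact: finite_finset.
move=> k _.
have m1 : measurable ((fun s : pt R d => tnth s.1 k) @^-1` `[a1 k, b1 k]%classic).
  rewrite -[X in measurable X]setTI.
  have mf : measurable_fun setT (fun s : pt R d => tnth (fst s) k) :=
    measurableT_comp (measurable_tnth k) measurable_fst.
  exact: (mf measurableT _ (measurable_itv _)).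
have m2 : measurable ((fun s : pt R d => tnth s.2 k) @^-1` `[a2 k, b2 k]%classic).
  rewrite -[X in measurable X]setTI.
  have mf : measurable_fun setT (fun s : pt R d => tnth (snd s) k) :=
    measurableT_comp (measurable_tnth k) measurable_snd.
  exact: (mf measurableT _ (measurable_itv _)).
exact: measurableI m1 m2.
Qed.

Lemma sum_ind (R : realType) (q : R) (N : nat) : 0 <= q -> forall m,
  \sum_(0 <= j < m) (if (j < N)%N then q else 0) <= (minn m N)%:R * q.
Proof.
move=> q0; elim => [|m IH]; first by rewrite big_geq // min0n mul0r.
rewrite big_nat_recr //=; case: ifP => mN.
  move: IH; rewrite (minn_idPl (ltnW mN)) (minn_idPl mN) => IH.
  by rewrite -addn1 natrD mulrDl mul1r lerD2r.
have Nm : (N <= m)%N by rewrite leqNgt mN.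
move: IH; rewrite (minn_idPr Nm) (minn_idPr (leq_trans Nm (leqnSn m))) => IH.
by rewrite addr0.
Qed.

Lemma cover (R : realType) d (hd : (1 <= d)%N) (phi : R -> pt R d) (F : R -> R) (L : R)
  (hL : 0 < L)
  (hF : forall u, 0 <= u <= 1 -> 0 <= F u <= L)
  (hLip : forall x y k, 0 <= x -> x <= y -> y <= 1 ->
     `|tnth (phi y).1 k - tnth (phi x).1 k| <= F y - F x /\
     `|tnth (phi y).2 k - tnth (phi x).2 k| <= F y - F x) :
  exists A : set (pt R d), measurable A /\ lebesgue_null2 A /\
    (forall u, 0 <= u <= 1 -> A (phi u)).
Proof.
pose c1 := fun u => (phi u).1.
pose c2 := fun u => (phi u).2.
pose box n j := box2 (lo c1 F L n j) (hi c1 F L n j) (lo c2 F L n j) (hi c2 F L n j).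
exists (\bigcap_n \bigcup_j box n j); split; [|split].
- apply: bigcapT_measurable => n; apply: bigcupT_measurable => j.
  exact: box2_measurable.
- move=> eps eps0.
  set M := 4 * L ^+ 2 / eps + (L + L).
  have M0 : 0 <= M by rewrite addr_ge0 ?divr_ge0 ?mulr_ge0 ?sqr_ge0 //; lra.
  set n := Num.Def.archi_bound M.
  have nM : M < n%:R := archi_boundP M0.
  set N : R := n.+1%:R.
  have NM : M < N by apply: (lt_le_trans nM); rewrite /N ler_nat.
  have N0 : 0 < N by rewrite /N ltr0n.
  set r := L / N.
  have r0 : 0 < r by rewrite divr_gt0.
  have rr : r + r = (L + L) / N by rewrite mulrDl.
  have r1 : r + r <= 1.
    rewrite rr ler_pdivrMr // mul1r; apply: ltW; apply: le_lt_trans NM.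
    by rewrite /M lerDr divr_ge0 ?mulr_ge0 ?sqr_ge0 //; lra.
  have key : N * (r + r) ^+ 2 <= eps.
    have h4 : 4 * L ^+ 2 < eps * N.
      rewrite -ltr_pdivrMl //; apply: le_lt_trans NM.
      by rewrite /M mulrC lerDl; lra.
    have -> : N * (r + r) ^+ 2 = 4 * L ^+ 2 / N.
      by rewrite rr /r; field; rewrite gt_eqF.
    by rewrite ler_pdivrMr //; exact: ltW.
  have e : forall c : R, c + r - (c - r) = r + r by move=> c; ring.
  have vj : forall j, vol2 (lo c1 F L n j) (hi c1 F L n j) (lo c2 F L n j) (hi c2 F L n j)
      = if (j < n.+1)%N then (r + r) ^+ (d + d)%N else 0.
    move=> j; rewrite /vol2 /lo /hi -/N -/r; case: ifP => _.
      rewrite (eq_bigr (fun _ => r + r)); last by move=> k _; rewrite e.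
      rewrite [X in _ * X](eq_bigr (fun _ => r + r)); last by move=> k _; rewrite e.
      by rewrite prodr_const card_ord -exprD.
    by rewrite subrr prodr_const card_ord expr0n /= gtn_eqF // mul0r.
  exists (lo c1 F L n), (hi c1 F L n), (lo c2 F L n), (hi c2 F L n); split.
  + move=> j k; rewrite /lo /hi -/N -/r; case: ifP => _; split => //; lra.
  + by move=> s As; exact: As n I.
  + move=> m; under eq_bigr do rewrite vj.
    have q0 : 0 <= (r + r) ^+ (d + d)%N by rewrite exprn_ge0 //; lra.
    apply: le_trans; first exact: (sum_ind n.+1 q0 m).
    have qle : (r + r) ^+ (d + d)%N <= (r + r) ^+ 2.
      by apply: ler_wiXn2l => //; [lra | exact: (leq_add hd hd)].
    apply: le_trans key; apply: ler_pM => //; first by rewrite ler_nat geq_minr.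
- move=> u u01 n _.
  set r := L / n.+1%:R.
  have r0 : 0 < r by rewrite divr_gt0 // ltr0n.
  have Fu := hF u u01.
  have [|j [jn hj]] := grid (t := F u) r0 (ltn0Sn n).
    by rewrite mulrC divfK ?pnatr_eq0 // Fu.
  have Jj : Jset F r j u by split.
  have [u01' hj'] := xgetPex 0 (ex_intro _ u Jj).
  exists j => //.
  have hjj : j.+1%:R * r = j%:R * r + r by rewrite -addn1 natrD mulrDl mul1r.
  rewrite /box /box2 /lo /hi jn -/r => k.
  have H : `|tnth (c1 (xget 0 (Jset F r j))) k - tnth (c1 u) k| <= r /\
           `|tnth (c2 (xget 0 (Jset F r j))) k - tnth (c2 u) k| <= r.
    set u0 := xget 0 (Jset F r j) in u01' hj' *.
    move: u01 u01' hj hj' => /andP [u0' u1] /andP [u00 u01] /andP [h1 h2] /andP [h3 h4].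
    case/orP: (le_total u u0) => uu0.
      have [H1 H2] := hLip u u0 k u0' uu0 u01.
      by split; [apply: (le_trans H1) | apply: (le_trans H2)]; lra.
    have [H1 H2] := hLip u0 u k u00 uu0 u1.
    by rewrite /c1 /c2 distrC (distrC (tnth (phi u0).2 k)); split;
      [apply: (le_trans H1) | apply: (le_trans H2)]; lra.
  by case: H; rewrite !ler_distlC => -> ->.
Qed.

Definition Dtv (R : realType) (f : R -> R) (x : R) : R := fine (total_variation 0 x f).

Lemma tv_prop (R : realType) (f : R -> R) : bounded_variation 0 1 f ->
  forall x y, 0 <= x -> x <= y -> y <= 1 ->
  `|f y - f x| <= Dtv f y - Dtv f x /\ 0 <= Dtv f y - Dtv f x.
Proof.
move=> bv x y x0 xy y1.
have y0 : 0 <= y by apply: le_trans xy.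
have bvy : bounded_variation 0 y f := bounded_variationl y0 y1 bv.
have bvx : bounded_variation 0 x f := bounded_variationl x0 xy bvy.
have bvxy : bounded_variation x y f := bounded_variationr x0 xy bvy.
have fx := (bounded_variationP f x0).1 bvx.
have fxy := (bounded_variationP f xy).1 bvxy.
rewrite /Dtv (total_variationD f x0 xy) fineD // addrAC subrr add0r.
split; last by rewrite fine_ge0 // total_variation_ge0.
by rewrite -lee_fin fineK // total_variation_ge.
Qed.

Lemma Dtv0 (R : realType) (f : R -> R) : Dtv f 0 = 0.
Proof. by rewrite /Dtv total_variationxx. Qed.

Unset Implicit Arguments.
Set Strict Implicit.

Theorem mainTheorem7 (R : realType) (d : nat) (hd : (1 <= d)%N)
  (rho : {measure set (pt R d) -> \bar R}) (Lambda : R)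
  (hLpos : 0 < Lambda)
  (hrhoOmega : rho (@Omega R d) = Lambda%:E)
  (hrhoOut : rho (~` @Omega R d) = 0%E)
  (hac : abs_cont_lebesgue2 (fun A => (rho A * (Lambda^-1)%:E)%E))
  (hgreen : forall V : set (d.-tuple R), proper_linear_subspace V ->
     rho [set s | ~ V s.1] <> 0%E)
  (hred : forall V : set (d.-tuple R), proper_linear_subspace V ->
     rho [set s | ~ V s.2] <> 0%E) :
  forall phi : R -> pt R d,
    measurable_fun `[(0:R), 1]%classic phi ->
    (forall u, `[(0:R), 1]%classic u -> @Omega R d (phi u)) ->
    (forall A : set (pt R d), measurable A ->
       (rho A * (Lambda^-1)%:E)%E = lebesgue_measure (`[(0:R), 1]%classic `&` phi @^-1` A)) ->
    ~ sectionally_BV (fun u v => K (phi u) (phi v)).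
Proof.
move=> phi mphi hOm hpush [hv hu].
have mfst : forall i, measurable_fun setT (fun s : pt R d => tnth (fst s) i) :=
  fun i => measurableT_comp (measurable_tnth i) measurable_fst.
have msnd : forall i, measurable_fun setT (fun s : pt R d => tnth (snd s) i) :=
  fun i => measurableT_comp (measurable_tnth i) measurable_snd.
have BVg : forall k, bounded_variation 0 1 (fun u => tnth (phi u).1 k).
  apply: (coordBV (f := fun u => (phi u).1)).
    exact: (premise hLpos mphi hpush msnd hred hv).
  by move=> x [v [v01 Pv] <-]; exact: Pv v01.
have BVr : forall k, bounded_variation 0 1 (fun v => tnth (phi v).2 k).
  apply: (coordBV (f := fun v => (phi v).2)).
    exact: (premise hLpos mphi hpush mfst hgreen hu).
  move=> x [u [u01 Pu] <-].
  under [fun v => _]funext => v do rewrite dotpC.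
  exact: Pu u01.
pose F u := \sum_(k < d) (Dtv (fun u => tnth (phi u).1 k) u + Dtv (fun v => tnth (phi v).2 k) u).
have hFd : forall x y, 0 <= x -> x <= y -> y <= 1 -> forall k,
   (`|tnth (phi y).1 k - tnth (phi x).1 k| <= F y - F x /\
    `|tnth (phi y).2 k - tnth (phi x).2 k| <= F y - F x) /\ 0 <= F y - F x.
  move=> x y x0 xy y1 k.
  have E : F y - F x = \sum_(k < d)
      ((Dtv (fun u => tnth (phi u).1 k) y - Dtv (fun u => tnth (phi u).1 k) x) +
       (Dtv (fun v => tnth (phi v).2 k) y - Dtv (fun v => tnth (phi v).2 k) x)).
    by rewrite /F -sumrB; apply: eq_bigr => i _; ring.
  have nn : forall i : 'I_d, 0 <=
      (Dtv (fun u => tnth (phi u).1 i) y - Dtv (fun u => tnth (phi u).1 i) x) +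
      (Dtv (fun v => tnth (phi v).2 i) y - Dtv (fun v => tnth (phi v).2 i) x).
    move=> i; apply: addr_ge0.
      exact: (tv_prop (BVg i) x0 xy y1).2.
    exact: (tv_prop (BVr i) x0 xy y1).2.
  rewrite E; split; last by apply: sumr_ge0 => i _; exact: nn.
  have [h1 h1'] := tv_prop (BVg k) x0 xy y1.
  have [h2 h2'] := tv_prop (BVr k) x0 xy y1.
  rewrite (bigD1 k) //=.
  have rest : 0 <= \sum_(i < d | i != k)
      ((Dtv (fun u => tnth (phi u).1 i) y - Dtv (fun u => tnth (phi u).1 i) x) +
       (Dtv (fun v => tnth (phi v).2 i) y - Dtv (fun v => tnth (phi v).2 i) x)).
    by apply: sumr_ge0 => i _; exact: nn.
  by split; lra.
have F0 : F 0 = 0.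
  by rewrite /F big1 // => k _; rewrite !Dtv0 addr0.
have dpos : (0 < d)%N by [].
pose k0 : 'I_d := Ordinal dpos.
have hF : forall u, 0 <= u <= 1 -> 0 <= F u <= F 1 + 1.
  move=> u /andP [u0 u1].
  have [_ A1] := hFd 0 u (lexx 0) u0 u1 k0.
  have [_ A2] := hFd u 1 u0 u1 (lexx 1) k0.
  rewrite F0 subr0 in A1; apply/andP; split => //; lra.
have hL : 0 < F 1 + 1.
  have [_ A1] := hFd 0 1 (lexx 0) ler01 (lexx 1) k0.
  rewrite F0 subr0 in A1; lra.
have [A [mA [nA hA]]] := cover hd hL hF (fun x y k x0 xy y1 => (hFd x y x0 xy y1 k).1).
have := hac A mA nA; rewrite /= hpush //.
have -> : `[(0:R), 1]%classic `&` phi @^-1` A = `[(0:R), 1]%classic.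
  apply: setIidl => u; rewrite /= in_itv /= => u01; exact: hA.
rewrite lebesgue_measure_itv /= lte_fin ltr01 oppr0 adde0 => /eqP.
by rewrite eqe oner_eq0.
Qed.
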